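(* There exist two-dimensional random vectors $\mathbf{X},\mathbf{Y}$ with $\mathbf{X}\succ_{\mathrm{FSD}}\mathbf{Y}$ and a function $u\in\mathcal{U}$ with $\frac{\partial^2u(x_1,x_2)}{\partial x_1\partial x_2}\le0$ such that $\mathbb{E}\,u(\mathbf{X})\le\mathbb{E}\,u(\mathbf{Y})$; i.e. strict first-order stochastic dominance does not in general imply strictly greater expected utility for all $u\in\mathcal{U}$ with nonpositive mixed partial derivative.
   Context: For $\mathbf{x},\mathbf{y}\in\mathbb{R}^2$: $\mathbf{y}\preceq_p\mathbf{x}$ iff $y_i\le x_i$ for all $i$; $\mathbf{x}\succ_p\mathbf{y}$ iff $x_i\ge y_i$ for all $i$ and $x_i>y_i$ for some $i$. $\mathcal{U}$ is the class of strictly monotonically increasing $u:\mathbb{R}^2\to\mathbb{R}$ ($\mathbf{x}\succ_p\mathbf{y}\implies u(\mathbf{x})>u(\mathbf{y})$). CDF: $F_{\mathbf{X}}(\mathbf{x})=P(\mathbf{X}\preceq_p\mathbf{x})$. $\mathbf{X}\succ_{\mathrm{FSD}}\mathbf{Y}$ iff $F_{\mathbf{X}}(\mathbf{v})\le F_{\mathbf{Y}}(\mathbf{v})$ for all $\mathbf{v}$ and strict inequality for some $\mathbf{v}$. *)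

(* Defs.v *)
From HB Require Import structures.
From mathcomp Require Import all_boot all_order all_algebra.
From mathcomp Require Import all_classical all_reals all_analysis.
Set Implicit Arguments. Unset Strict Implicit. Unset Printing Implicit Defensive.
Import Order.TTheory GRing.Theory Num.Theory.
Import numFieldNormedType.Exports.
Local Open Scope classical_set_scope.
Local Open Scope ring_scope.

Section Defs.
Variable R : realType.

Definition pleq (y x : R * R) : Prop := y.1 <= x.1 /\ y.2 <= x.2.

Definition psucc (x y : R * R) : Prop :=
  x.1 >= y.1 /\ x.2 >= y.2 /\ (x.1 > y.1 \/ x.2 > y.2).

Definition strictly_increasing2 (u : R * R -> R) : Prop :=
  forall x y, psucc x y -> u x > u y.

Definition cdf2 d (T : measurableType d) (P : probability T R)
  (X : T -> R * R) (v : R * R) : \bar R :=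
  P [set t | pleq (X t) v].

Definition FSD d (T : measurableType d) (P : probability T R)
  (X Y : T -> R * R) : Prop :=
  (forall v, (cdf2 P X v <= cdf2 P Y v)%E) /\
  (exists v, (cdf2 P X v < cdf2 P Y v)%E).

Definition pd1 (u : R * R -> R) (x : R * R) : R :=
  derive1 (fun t => u (t, x.2)) x.1.
Definition pd2 (u : R * R -> R) (x : R * R) : R :=
  derive1 (fun s => u (x.1, s)) x.2.

Definition mixed_partial_nonpos (u : R * R -> R) : Prop :=
  forall x : R * R,
    [/\ derivable (fun t => u (t, x.2)) x.1 1,
        derivable (fun s => u (x.1, s)) x.2 1,
        derivable (fun s => pd1 u (x.1, s)) x.2 1 /\
          derive1 (fun s => pd1 u (x.1, s)) x.2 <= 0 &
        derivable (fun t => pd2 u (t, x.2)) x.1 1 /\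
          derive1 (fun t => pd2 u (t, x.2)) x.1 <= 0].
End Defs.

(* Main.v *)
Require Import Defs.
From HB Require Import structures.
From mathcomp Require Import all_boot all_order all_algebra.
From mathcomp Require Import all_classical all_reals all_analysis.
From mathcomp Require Import lra.
Import Order.TTheory GRing.Theory Num.Theory.
Local Open Scope classical_set_scope.
Local Open Scope ring_scope.

Section Aux.
Variable R : realType.

Let u (x : R * R) : R := x.1 + x.2.

Lemma pd1_u x : pd1 u x = 1.
Proof.
rewrite /pd1 /u /=.
have -> : (fun t => t + x.2) = (id \+ cst x.2) by [].
by rewrite derive1E derive_val addr0.
Qed.

Lemma pd2_u x : pd2 u x = 1.
Proof.
rewrite /pd2 /u /=.
have -> : (fun t => x.1 + t) = (cst x.1 \+ id) by [].
by rewrite derive1E derive_val add0r.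
Qed.

Lemma u_mixed : mixed_partial_nonpos u.
Proof.
move=> x; split.
- rewrite /u /=; have -> : (fun t => t + x.2) = (id \+ cst x.2) by [].
  exact: derivableD.
- rewrite /u /=; have -> : (fun t => x.1 + t) = (cst x.1 \+ id) by [].
  exact: derivableD.
- have -> : (fun s => pd1 u (x.1, s)) = cst 1 by apply/funext => s; rewrite pd1_u.
  by split; [exact: derivable_cst | rewrite derive1_cst].
- have -> : (fun t => pd2 u (t, x.2)) = cst 1 by apply/funext => s; rewrite pd2_u.
  by split; [exact: derivable_cst | rewrite derive1_cst].
Qed.

Lemma u_incr : strictly_increasing2 u.
Proof.
move=> x y [h1 [h2 [h3|h3]]]; rewrite /u.
- by apply: ltr_leD.
- by apply: ler_ltD.
Qed.

Lemma ind_ineq (a b c d : bool) : (b ==> a) -> (d ==> c) ->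
  (b && c)%:R + (a && d)%:R <= (b && d)%:R + (a && c)%:R :> R.
Proof. by case: a; case: b; case: c; case: d => //= _ _; rewrite ?addr0 ?add0r ?ler01 ?lexx ?ler0n // ler_nat. Qed.

End Aux.

Theorem mainTheorem11 (R : realType) :
  exists (d : measure_display) (T : measurableType d) (P : probability T R)
         (X Y : T -> R * R) (u : R * R -> R),
    [/\ measurable_fun setT X /\ measurable_fun setT Y,
        FSD P X Y,
        strictly_increasing2 u /\ mixed_partial_nonpos u,
        P.-integrable setT (fun t => (u (X t))%:E) /\
          P.-integrable setT (fun t => (u (Y t))%:E) &
        (\int[P]_t (u (X t))%:E <= \int[P]_t (u (Y t))%:E)%E].
Proof.
pose P := bernoulli_prob (2^-1 : R).
have p01 : (0 <= (2^-1 : R) <= 1) by apply/andP; split; lra.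
pose X := fun b : bool => if b then ((1:R), (0:R)) else ((0:R), (1:R)).
pose Y := fun b : bool => if b then ((1:R), (1:R)) else ((0:R), (0:R)).
have Pset (Q : set bool) : (P : probability bool R) Q =
    (2^-1 * (asbool (Q true))%:R + 2^-1 * (asbool (Q false))%:R)%:E.
  rewrite /P /=; rewrite bernoulli_probE // !diracE /=.
  idtac.
  rewrite /unstable.onem.
  case: (pselect (Q true)) => qt; case: (pselect (Q false)) => qf.
  all: rewrite ?(asboolT qt) ?(asboolF qt) ?(asboolT qf) ?(asboolF qf).
  all: rewrite ?(@mem_set _ Q true qt) ?(@memNset _ Q true qt) ?(@mem_set _ Q false qf) ?(@memNset _ Q false qf) /=.
  all: rewrite ?mule1 ?mule0 ?adde0 ?add0e -?EFinD ?mulr0 ?mulr1 ?addr0 ?add0r //; f_equal; try lra.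
exists _, bool, P, X, Y, (fun x => x.1 + x.2).
split.
- by split => ? ? ?; exact: I.
- split.
  + move=> v; rewrite /cdf2 !Pset lee_fin /pleq /X /Y /= !asbool_and !asboolb.
    rewrite -!mulrDr; apply: ler_wpM2l; first lra.
    apply: ind_ineq; apply/implyP => h; lra.
  + exists ((0:R), (0:R)); rewrite /cdf2 !Pset lte_fin /pleq /X /Y /= !asbool_and !asboolb.
    rewrite lexx ler10 /= mulr0 mulr1 !add0r; lra.
- split; [exact: u_incr | exact: u_mixed].
- split; apply/integrableP; (split; first by move=> ? ? ?; exact: I);
    rewrite integral_bernoulli_prob //= ?abse_ge0 //;
    rewrite -!EFinM -EFinD ltry //.
- rewrite !integral_bernoulli_prob //=; last 2 first.
  + by case; rewrite /= lee_fin; lra.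
  + by case; rewrite /= lee_fin; lra.
  rewrite -!EFinM -!EFinD lee_fin /unstable.onem; lra.
Qed.
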